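(* $S\mathbb{H}$ is diffeomorphic to $S^3\times S^3\times\mathbb{R}$. In particular, $S\mathbb{H}$ is orientable.
   Context: For $q=a+bi+cj+dk\in\mathbb{H}$, $\bar q=a-bi-cj-dk$. $\mathcal{V}=\mathrm{span}_\mathbb{R}\{1,i,j\}$. $S\mathbb{H}=\{(\xi,\eta)\in\mathbb{H}^2\setminus\{(0,0)\}:\xi\bar\eta\in\mathcal{V}\}$, a subset of $\mathbb{H}^2\cong\mathbb{R}^8$. *)

(* Defs.v *)
From HB Require Import structures.
From mathcomp Require Import all_boot all_order all_algebra.
From mathcomp Require Import all_classical all_reals all_analysis.
Set Implicit Arguments. Unset Strict Implicit. Unset Printing Implicit Defensive.
Import Order.TTheory GRing.Theory Num.Theory.
Import numFieldNormedType.Exports.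
Local Open Scope classical_set_scope.
Local Open Scope ring_scope.

Fixpoint iterD {R : realType} {V W : normedModType R} (vs : seq V) (f : V -> W)
  : V -> W :=
  match vs with
  | [::] => f
  | v :: vs' => fun x => 'D_v (iterD vs' f) x
  end.

Definition smooth_on {R : realType} {V W : normedModType R} (U : set V)
  (f : V -> W) : Prop :=
  forall vs : seq V,
    (forall (v x : V), U x -> derivable (iterD vs f) x v) /\
    (forall x : V, U x -> {for x, continuous (iterD vs f)}).

(* Milnor's notion: f : A -> B (A a subset of V) is smooth if it locally extends
   to a smooth map on an open neighbourhood in the ambient space *)
Definition smooth_map_on {R : realType} {V W : normedModType R} (A : set V)
  (f : V -> W) : Prop :=
  forall a, A a -> exists U : set V, open U /\ U a /\
     exists h : V -> W, smooth_on U h /\ (forall x, U x -> A x -> h x = f x).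

Definition diffeomorphic {R : realType} {V W : normedModType R}
  (A : set V) (B : set W) : Prop :=
  exists (f : V -> W) (g : W -> V),
    (forall a, A a -> B (f a)) /\ (forall b, B b -> A (g b)) /\
    (forall a, A a -> g (f a) = a) /\ (forall b, B b -> f (g b) = b) /\
    smooth_map_on A f /\ smooth_map_on B g.

Record quat (R : Type) := Quat { qa : R; qb : R; qc : R; qd : R }.

(* q = qa + qb i + qc j + qd k *)
Definition qmul {R : ringType} (p q : quat R) : quat R :=
  Quat (qa p * qa q - qb p * qb q - qc p * qc q - qd p * qd q)
       (qa p * qb q + qb p * qa q + qc p * qd q - qd p * qc q)
       (qa p * qc q - qb p * qd q + qc p * qa q + qd p * qb q)
       (qa p * qd q + qb p * qc q - qc p * qb q + qd p * qa q).

Definition qconj {R : ringType} (q : quat R) : quat R :=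
  Quat (qa q) (- qb q) (- qc q) (- qd q).

Definition inV {R : ringType} (q : quat R) : Prop := qd q = 0.

Definition quat_of_row {R : ringType} (x : 'rV[R]_4) : quat R :=
  Quat (x 0 (inord 0)) (x 0 (inord 1)) (x 0 (inord 2)) (x 0 (inord 3)).

(* S H inside H^2 = R^(4+4) = R^8 ; a point z = (xi, eta) *)
Definition SH (R : realType) : set 'rV[R]_(4 + 4) :=
  [set z | z != 0 /\
     inV (qmul (quat_of_row (lsubmx z)) (qconj (quat_of_row (rsubmx z))))].

Definition S3 {R : realType} (x : 'rV[R]_4) : Prop :=
  \sum_(i < 4) x 0 i ^+ 2 = 1.

Definition S3xS3xR (R : realType) : set 'rV[R]_(4 + 4 + 1) :=
  [set w | S3 (lsubmx (lsubmx w)) /\ S3 (rsubmx (lsubmx w))].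

(* Main.v *)
Require Import Defs.
From mathcomp Require Import all_boot all_order all_algebra.
From mathcomp Require Import all_classical all_reals all_analysis.
From mathcomp Require Import ring lra.
Import Order.TTheory GRing.Theory Num.Theory.
Import numFieldNormedType.Exports.
Local Open Scope classical_set_scope.
Local Open Scope ring_scope.

Section Frame.
Variables (R : realType) (n : nat).
Local Notation V := 'rV[R]_n.

Lemma open_near (U : set V) x : open U -> U x -> \forall y \near x, U y.
Proof. by move=> oU Ux; apply: open_nbhs_nbhs; split. Qed.

Lemma near_eq_cont (f g : V -> R) x : {near x, f =1 g} ->
  {for x, continuous f} -> {for x, continuous g}.
Proof.
move=> fg cf; have e : f x = g x by apply: (nbhs_singleton fg).
move: cf; rewrite /prop_for /continuous_at e => cf; apply: cvg_trans cf.
exact: near_eq_cvg fg.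
Qed.
Arguments near_eq_cont [f g x].

Lemma deriveE1 (f : V -> R) x v :
  'D_v f x = derive1 (fun h : R => f (h *: v + x)) 0.
Proof.
rewrite derive.derive1E /derive; set g1 := fun h => h^-1 *: _; set g2 := fun h => h^-1 *: _.
suff -> : g1 = g2 by [].
by rewrite funeqE /g1 /g2 => h /=; rewrite addr0 scale0r add0r [_%:A]mulr1.
Qed.

Lemma comp_rule (phi : R -> R) (f : V -> R) x v :
  derivable f x v -> derivable phi (f x) 1 ->
  derivable (fun y => phi (f y)) x v /\
  'D_v (fun y => phi (f y)) x = derive1 phi (f x) * 'D_v f x.
Proof.
move=> df dphi.
have dL := (derivable1P f x v).1 df.
have e0 : (fun h : R => f (h *: v + x)) 0 = f x by rewrite scale0r add0r.
split.
  apply/(derivable1P _ x v).2; apply/derivable1_diffP.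
  apply: (differentiable_comp (f := fun h : R => f (h *: v + x)) (g := phi)).
    exact/derivable1_diffP.
  by rewrite e0; apply/derivable1_diffP.
rewrite deriveE1 (deriveE1 f).
rewrite (@derive1_comp _ (fun h : R => f (h *: v + x)) phi) //; last by rewrite e0.
by rewrite e0.
Qed.
Arguments comp_rule [phi f x v].


Inductive Sm (U : set V) : (V -> R) -> Prop :=
| Sm_cst c : Sm U (fun _ => c)
| Sm_crd i : Sm U (fun x => x 0 i)
| Sm_add f g : Sm U f -> Sm U g -> Sm U (fun x => f x + g x)
| Sm_mul f g : Sm U f -> Sm U g -> Sm U (fun x => f x * g x)
| Sm_exp f : Sm U f -> Sm U (fun x => expR (f x))
| Sm_ln f : Sm U f -> (forall x, U x -> 0 < f x) -> Sm U (fun x => ln (f x))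
| Sm_ext f g : Sm U f -> (forall x, U x -> f x = g x) -> Sm U g.
Arguments Sm_add {U f g}. Arguments Sm_mul {U f g}. Arguments Sm_exp {U f}.
Arguments Sm_ln {U f}. Arguments Sm_ext {U f g}.

Lemma Sm_props (U : set V) (oU : open U) f : Sm U f ->
  (forall x, U x -> {for x, continuous f} /\ forall v, derivable f x v) /\
  forall v, Sm U (fun x => 'D_v f x).
Proof.
elim=> {f}.
- move=> c; split; first by move=> x _; split; [exact: cst_continuous|move=> v; exact: derivable_cst].
  move=> v; apply: (Sm_ext (Sm_cst U 0)) => x _.
  by rewrite (derive_cst c).
- move=> i; split.
    move=> x _; split; first exact: coord_continuous.
    by move=> v; apply: diff_derivable; apply: differentiable_coord.
  move=> v; apply: (Sm_ext (Sm_cst U (v 0 i))) => x _.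
  have := congr1 (fun M : 'rV[R]_n => M 0 i) (@derive_mx _ _ _ _ (@id 'rV[R]_n) x v (@derivable_id _ _ x v)).
  by rewrite /= derive_id mxE.
- move=> f g _ [Pf Df] _ [Pg Dg]; split.
    move=> x Ux; have [cf df] := Pf x Ux; have [cg dg] := Pg x Ux; split.
      exact: (continuousD cf cg).
    by move=> v; apply: (derivableD (df v) (dg v)).
  move=> v; apply: (Sm_ext (Sm_add (Df v) (Dg v))) => x Ux.
  have [cf df] := Pf x Ux; have [cg dg] := Pg x Ux.
  by rewrite (deriveD (df v) (dg v)).
- move=> f g Sf [Pf Df] Sg [Pg Dg]; split.
    move=> x Ux; have [cf df] := Pf x Ux; have [cg dg] := Pg x Ux; split.
      exact: (continuousM cf cg).
    by move=> v; apply: (derivableM (df v) (dg v)).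
  move=> v; apply: (Sm_ext (Sm_add (Sm_mul Sf (Dg v)) (Sm_mul Sg (Df v)))) => x Ux.
  have [cf df] := Pf x Ux; have [cg dg] := Pg x Ux.
  by rewrite (deriveM (df v) (dg v)).
- move=> f Sf [Pf Df].
  have dexp : forall y : R, derivable expR y 1.
    by move=> y; apply: ex_derive; apply: is_derive_expR.
  split.
    move=> x Ux; have [cf df] := Pf x Ux; split.
      by apply: (@continuous_comp _ _ _ f expR); [exact: cf|exact: continuous_expR].
    by move=> v; have [] := comp_rule (df v) (dexp (f x)).
  move=> v; apply: (Sm_ext (Sm_mul (Sm_exp Sf) (Df v))) => x Ux.
  have [cf df] := Pf x Ux; have [_ ->] := comp_rule (df v) (dexp (f x)).
  rewrite derive.derive1E; suff -> : 'D_1 expR (f x) = expR (f x) :> R by []; exact: (congr1 (fun F : R -> R => F (f x)) (@derive_expR R)).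
- move=> f Sf [Pf Df] fpos.
  have dln : forall x, U x -> derivable (@ln R) (f x) 1.
    by move=> x Ux; have [] := is_derive1_ln (fpos x Ux).
  split.
    move=> x Ux; have [cf df] := Pf x Ux; split.
      by apply: (@continuous_comp _ _ _ f (@ln R)); [exact: cf|exact: continuous_ln (fpos x Ux)].
    by move=> v; have [] := comp_rule (df v) (dln x Ux).
  move=> v; apply: (Sm_ext (Sm_mul (Sm_exp (Sm_mul (Sm_cst U (-1)) (Sm_ln Sf fpos))) (Df v))) => x Ux.
  have [cf df] := Pf x Ux; have [_ ->] := comp_rule (df v) (dln x Ux).
  have [_ e] := is_derive1_ln (fpos x Ux).
  rewrite derive.derive1E e mulN1r expRN lnK //; exact: fpos.
- move=> f g Sf [Pf Df] fg.
  have nfg : forall x, U x -> {near x, f =1 g}.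
    by move=> x Ux; near=> y; apply: fg; near: y; exact: open_near oU Ux.
  split.
    move=> x Ux; have [cf df] := Pf x Ux; split.
      exact: (near_eq_cont (nfg x Ux) cf).
    by move=> v; apply: (near_eq_derivable (nfg x Ux) (df v)).
  move=> v; apply: (Sm_ext (Df v)) => x Ux.
  exact: near_eq_derive (nfg x Ux).
Unshelve. all: by end_near. Qed.
Arguments Sm_props [U] oU [f].


Lemma cont_mx m k (M : V -> 'M[R]_(m, k)) t :
  (forall i j, {for t, continuous (fun x => M x i j)}) -> {for t, continuous M}.
Proof.
move=> Mc; rewrite /prop_for /continuous_at; apply/(@cvgrPdist_le _ _ _ (nbhs t) (nbhs_filter t)) => /= e e0.
near=> x.
rewrite [leLHS]/Num.Def.normr/= mx_normrE (bigmax_le _ (ltW e0))//= => ij _.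
rewrite !mxE/=.
move: ij; near: x; apply: filter_forall => ij.
exact: ((cvgrPdist_le _ _).1 (Mc ij.1 ij.2) e e0).
Unshelve. all: by end_near. Qed.

Definition SmV m (U : set V) (F : V -> 'rV[R]_m) := forall j, Sm U (fun x => F x 0 j).
Arguments SmV [m] U F.

Lemma SmV_props m (U : set V) (oU : open U) (F : V -> 'rV[R]_m) : SmV U F ->
  (forall x, U x -> {for x, continuous F} /\ forall v, derivable F x v) /\
  forall v, SmV U (fun x => 'D_v F x).
Proof.
move=> SF.
have P := fun j => Sm_props oU (SF j).
split.
  move=> x Ux; split.
    apply: cont_mx => i j; rewrite (ord1 i).
    by have [/(_ x Ux) [] ] := P j.
  move=> v; apply/derivable_mxP => i j; rewrite (ord1 i).
  by have [/(_ x Ux) [_ Hd] _] := P j; apply: Hd.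
move=> v j; have [Pj Dj] := P j.
apply: (Sm_ext (Dj v)) => x Ux.
have dF : derivable F x v.
  apply/derivable_mxP => i j'; rewrite (ord1 i).
  by have [/(_ x Ux) [_ Hd] _] := P j'; apply: Hd.
by rewrite (derive_mx dF) mxE.
Qed.
Arguments SmV_props [m U] oU [F].

Lemma SmV_smooth m (U : set V) (oU : open U) (F : V -> 'rV[R]_m) : SmV U F ->
  smooth_on U F.
Proof.
move=> SF vs.
have : SmV U (Defs.iterD vs F).
  elim: vs => [|v vs IH] //=.
  by have [_ ] := SmV_props oU IH; apply.
move=> /(SmV_props oU) [P _]; split.
  by move=> v x Ux; have [_] := P x Ux; apply.
by move=> x Ux; have [] := P x Ux.
Qed.

End Frame.
Arguments Sm_cst {R n} U c. Arguments Sm_crd {R n} U i.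
Arguments Sm_add {R n U f g}. Arguments Sm_mul {R n U f g}. Arguments Sm_exp {R n U f}.
Arguments Sm_ln {R n U f}. Arguments Sm_ext {R n U f g}.
Arguments Sm_props {R n U} oU {f}.
Arguments SmV {R n m} U F.
Arguments SmV_props {R n m U} oU {F}.
Arguments SmV_smooth {R n m U} oU {F}.
Arguments Sm {R n} U _.

Section Conc.
Variable R : realType.

Definition uu (c : nat -> R) (k : nat) : R := match k with
  | 0 => c 3%N + c 4%N | 1 => c 0%N - c 7%N | 2 => c 2%N + c 5%N | _ => c 1%N - c 6%N end.
Definition vv (c : nat -> R) (k : nat) : R := match k with
  | 0 => c 3%N - c 4%N | 1 => c 0%N + c 7%N | 2 => c 2%N - c 5%N | _ => c 1%N + c 6%N end.
Definition su (c : nat -> R) := uu c 0 * uu c 0 + uu c 1 * uu c 1 + uu c 2 * uu c 2 + uu c 3 * uu c 3.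
Definition sv (c : nat -> R) := vv c 0 * vv c 0 + vv c 1 * vv c 1 + vv c 2 * vv c 2 + vv c 3 * vv c 3.

Definition Fc (c : nat -> R) (j : nat) : R := match j with
  | 0 => uu c 0 * expR (- (1/2) * ln (su c))
  | 1 => uu c 1 * expR (- (1/2) * ln (su c))
  | 2 => uu c 2 * expR (- (1/2) * ln (su c))
  | 3 => uu c 3 * expR (- (1/2) * ln (su c))
  | 4 => vv c 0 * expR (- (1/2) * ln (sv c))
  | 5 => vv c 1 * expR (- (1/2) * ln (sv c))
  | 6 => vv c 2 * expR (- (1/2) * ln (sv c))
  | 7 => vv c 3 * expR (- (1/2) * ln (sv c))
  | 8 => 1/2 * ln (su c)
  | _ => 0 end.

Definition Gc (c : nat -> R) (j : nat) : R := match j with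
  | 0 => expR (c 8%N) * ((c 1%N + c 5%N) / 2)
  | 1 => expR (c 8%N) * ((c 3%N + c 7%N) / 2)
  | 2 => expR (c 8%N) * ((c 2%N + c 6%N) / 2)
  | 3 => expR (c 8%N) * ((c 0%N + c 4%N) / 2)
  | 4 => expR (c 8%N) * ((c 0%N - c 4%N) / 2)
  | 5 => expR (c 8%N) * ((c 2%N - c 6%N) / 2)
  | 6 => expR (c 8%N) * ((c 7%N - c 3%N) / 2)
  | 7 => expR (c 8%N) * ((c 5%N - c 1%N) / 2)
  | _ => 0 end.

Definition crd n (z : 'rV[R]_n.+1) (k : nat) : R := z 0 (inord k).
Arguments crd [n].

Definition ff (z : 'rV[R]_(4 + 4)) : 'rV[R]_(4 + 4 + 1) :=
  \row_(j < 4 + 4 + 1) Fc (crd z) j.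
Definition gg (w : 'rV[R]_(4 + 4 + 1)) : 'rV[R]_(4 + 4) :=
  \row_(j < 4 + 4) Gc (crd w) j.

Lemma crd_row n (F : nat -> R) k : (k < n.+1)%N -> crd (\row_(j < n.+1) F j) k = F k.
Proof. by move=> hk; rewrite /crd mxE inordK. Qed.

Lemma Sm_opp n (U : set 'rV[R]_n) f : Sm U f -> Sm U (fun x => - f x).
Proof.
move=> Sf; apply: (Sm_ext (Sm_mul (Sm_cst U (-1)) Sf)) => x _; by rewrite mulN1r.
Qed.

Ltac sm := repeat first [ apply: Sm_cst | apply: Sm_crd | apply: Sm_add | apply: Sm_mul
  | apply: Sm_exp | apply: Sm_opp | apply: Sm_ln ].

Definition Uf : set 'rV[R]_(4 + 4) := [set z | 0 < su (crd z) /\ 0 < sv (crd z)].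

Lemma Sm_ff j : Sm Uf (fun z => ff z 0 j).
Proof.
apply: (@Sm_ext _ _ _ (fun z => Fc (crd z) j)); last by move=> z _; rewrite mxE.
case: j => -[|[|[|[|[|[|[|[|[|j]]]]]]]]] hj //=; rewrite /su /sv /uu /vv /crd /=; sm.
all: try by move=> z [].
Qed.

Lemma Sm_gg j : Sm setT (fun w => gg w 0 j).
Proof.
apply: (@Sm_ext _ _ _ (fun w => Gc (crd w) j)); last by move=> z _; rewrite mxE.
by case: j => -[|[|[|[|[|[|[|[|j]]]]]]]] hj //=; rewrite /crd /=; sm.
Qed.


Lemma sum4 (F : 'I_4 -> R) :
  \sum_(i < 4) F i = F (inord 0) + F (inord 1) + F (inord 2) + F (inord 3).
Proof.
rewrite !big_ord_recr big_ord0 /= add0r.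
by repeat congr (_ + _); congr (F _); apply: val_inj; rewrite /= inordK.
Qed.

Lemma l_crd (z : 'rV[R]_(4 + 4)) k : (k < 4)%N -> lsubmx z 0 (inord k) = crd z k.
Proof. by move=> hk; rewrite mxE /crd; congr (z 0 _); apply: val_inj; rewrite /= !inordK // (ltn_trans hk). Qed.

Lemma r_crd (z : 'rV[R]_(4 + 4)) k : (k < 4)%N -> rsubmx z 0 (inord k) = crd z (4 + k).
Proof. by move=> hk; rewrite mxE /crd; congr (z 0 _); apply: val_inj; rewrite /= !inordK. Qed.

Lemma ll_crd (w : 'rV[R]_(4 + 4 + 1)) k : (k < 4)%N -> lsubmx (lsubmx w) 0 (inord k) = crd w k.
Proof. by move=> hk; rewrite !mxE /crd; congr (w 0 _); apply: val_inj; rewrite /= !inordK // (ltn_trans hk). Qed.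

Lemma rl_crd (w : 'rV[R]_(4 + 4 + 1)) k : (k < 4)%N -> rsubmx (lsubmx w) 0 (inord k) = crd w (4 + k).
Proof. by move=> hk; rewrite !mxE /crd; congr (w 0 _); apply: val_inj; rewrite /= !inordK //; case: k hk => [|[|[|[|]]]]. Qed.

Definition Qf (c : nat -> R) := c 3%N * c 4%N - c 0%N * c 7%N + c 2%N * c 5%N - c 1%N * c 6%N.

Lemma SH_E z : @SH R z <-> z != 0 /\ Qf (crd z) = 0.
Proof.
rewrite /SH /inV /qmul /qconj /quat_of_row /= !l_crd // !r_crd //=.
suff -> : crd z 0 * - crd z 7 + crd z 1 * - crd z 6 - crd z 2 * - crd z 5 + crd z 3 * crd z 4
   = Qf (crd z) by [].
by rewrite /Qf; ring.
Qed.

Lemma T_E w : @S3xS3xR R w <->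
  (crd w 0 ^+ 2 + crd w 1 ^+ 2 + crd w 2 ^+ 2 + crd w 3 ^+ 2 = 1 /\
   crd w 4 ^+ 2 + crd w 5 ^+ 2 + crd w 6 ^+ 2 + crd w 7 ^+ 2 = 1).
Proof. by rewrite /S3xS3xR /S3 /= !sum4 !ll_crd // !rl_crd. Qed.


Lemma crd_ff z k : (k < 9)%N -> crd (ff z) k = Fc (crd z) k.
Proof. exact: crd_row. Qed.
Lemma crd_gg w k : (k < 8)%N -> crd (gg w) k = Gc (crd w) k.
Proof. exact: crd_row. Qed.

Lemma Qf_su (c : nat -> R) : 4 * Qf c = su c - sv c.
Proof. by rewrite /Qf /su /sv /uu /vv; ring. Qed.

Lemma susv (c : nat -> R) : su c + sv c = 2 * (c 0%N ^+ 2 + c 1%N ^+ 2 + c 2%N ^+ 2 + c 3%N ^+ 2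
   + c 4%N ^+ 2 + c 5%N ^+ 2 + c 6%N ^+ 2 + c 7%N ^+ 2).
Proof. by rewrite /su /sv /uu /vv; ring. Qed.

Lemma sum_sq_pos (z : 'rV[R]_(4 + 4)) : z != 0 -> 0 < su (crd z) + sv (crd z).
Proof.
move=> nz; rewrite susv.
have sq : forall k, 0 <= crd z k ^+ 2 by move=> k; exact: sqr_ge0.
case: (pickP (fun j => z 0 j != 0)) => [j hj | h]; last first.
  case/negP: nz; apply/eqP/rowP => j; rewrite !mxE.
  by move/negbFE/eqP: (h j).
have hj' : crd z j != 0 by rewrite /crd inord_val.
have pj : 0 < crd z j ^+ 2 by rewrite exprn_even_gt0.
move: pj hj'; case: j hj => -[|[|[|[|[|[|[|[|j]]]]]]]] hj //= _ pj _.
all: have := sq 0%N; have := sq 1%N; have := sq 2%N; have := sq 3%N.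
all: have := sq 4%N; have := sq 5%N; have := sq 6%N; have := sq 7%N.
all: lra.
Qed.

Lemma SH_pos z : SH z -> 0 < su (crd z) /\ sv (crd z) = su (crd z).
Proof.
move=> /SH_E [nz hq]; have := Qf_su (crd z); rewrite hq mulr0 => e.
have := @sum_sq_pos z nz; move=> hp; split; lra.
Qed.

Lemma sq4 (E a b c d : R) :
  (a * E) ^+ 2 + (b * E) ^+ 2 + (c * E) ^+ 2 + (d * E) ^+ 2 = E * E * (a * a + b * b + c * c + d * d).
Proof. by ring. Qed.

Lemma ff_in z : SH z -> S3xS3xR (ff z).
Proof.
move=> /SH_pos [spos hsv]; apply/T_E; rewrite !crd_ff // /Fc hsv !sq4 -/(su (crd z)).
set s := su (crd z).
have -> : (vv (crd z) 0 * vv (crd z) 0 + vv (crd z) 1 * vv (crd z) 1 +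
     vv (crd z) 2 * vv (crd z) 2 + vv (crd z) 3 * vv (crd z) 3) = s by exact: hsv.
have EE : expR (- (1/2) * ln s) * expR (- (1/2) * ln s) = s^-1.
  rewrite -expRD -mulrDl.
  have -> : - (1/2) + - (1/2) = -1 :> R by field.
  by rewrite mulN1r expRN lnK // posrE.
by rewrite EE mulVf ?gt_eqF.
Qed.


Lemma uv_gg w :
  [/\ uu (crd (gg w)) 0 = expR (crd w 8) * crd w 0, uu (crd (gg w)) 1 = expR (crd w 8) * crd w 1,
      uu (crd (gg w)) 2 = expR (crd w 8) * crd w 2 & uu (crd (gg w)) 3 = expR (crd w 8) * crd w 3] /\
  [/\ vv (crd (gg w)) 0 = expR (crd w 8) * crd w 4, vv (crd (gg w)) 1 = expR (crd w 8) * crd w 5,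
      vv (crd (gg w)) 2 = expR (crd w 8) * crd w 6 & vv (crd (gg w)) 3 = expR (crd w 8) * crd w 7].
Proof.
rewrite /uu /vv !crd_gg // /Gc.
by split; split; field.
Qed.

Lemma s_gg w : S3xS3xR w ->
  su (crd (gg w)) = expR (crd w 8) * expR (crd w 8) /\
  sv (crd (gg w)) = expR (crd w 8) * expR (crd w 8).
Proof.
move=> /T_E [h1 h2]; have [[u0 u1 u2 u3] [v0 v1 v2 v3]] := uv_gg w.
rewrite /su /sv u0 u1 u2 u3 v0 v1 v2 v3; split.
  by rewrite -[RHS]mulr1 -h1; ring.
by rewrite -[RHS]mulr1 -h2; ring.
Qed.

Lemma gg_in w : S3xS3xR w -> SH (gg w).
Proof.
move=> hw; have [hu hv] := @s_gg w hw.
have pos : 0 < expR (crd w 8) * expR (crd w 8) by rewrite mulr_gt0 // expR_gt0.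
apply/SH_E; split.
  apply/eqP => h0; move: hu; rewrite h0.
  rewrite /su /uu /crd !mxE => e; move: pos; rewrite -e; lra.
have := Qf_su (crd (gg w)); rewrite hu hv subrr => e.
have : Qf (crd (gg w)) * 4 = 0 by rewrite mulrC e.
by move/eqP; rewrite mulf_eq0 => /orP [/eqP //|]; rewrite pnatr_eq0.
Qed.

Lemma gf z : SH z -> gg (ff z) = z.
Proof.
move=> /SH_pos [spos hsv]; apply/rowP => j.
have -> : z 0 j = crd z j by rewrite /crd inord_val.
rewrite mxE.
have EA : expR (- (1/2) * ln (su (crd z))) = (expR (1/2 * ln (su (crd z))))^-1.
  by rewrite mulNr expRN.
have A0 : expR (1/2 * ln (su (crd z))) != 0 by rewrite gt_eqF // expR_gt0.
case: j => -[|[|[|[|[|[|[|[|j]]]]]]]] hj //=; rewrite /Gc !crd_ff // /Fc hsv EA /uu /vv.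
all: by field.
Qed.

Lemma fg w : S3xS3xR w -> ff (gg w) = w.
Proof.
move=> hw; have [hu hv] := @s_gg w hw; have [[u0 u1 u2 u3] [v0 v1 v2 v3]] := uv_gg w.
have L : ln (expR (crd w 8) * expR (crd w 8)) = crd w 8 + crd w 8 by rewrite -expRD expRK.
have EA : expR (- (1/2) * (crd w 8 + crd w 8)) = (expR (crd w 8))^-1.
  by rewrite -expRN; congr expR; field.
have A0 : expR (crd w 8) != 0 by rewrite gt_eqF // expR_gt0.
apply/rowP => j.
have -> : w 0 j = crd w j by rewrite /crd inord_val.
rewrite mxE.
case: j => -[|[|[|[|[|[|[|[|[|j]]]]]]]]] hj //=; rewrite /Fc ?hu ?hv ?L ?EA ?crd_gg // /Gc.
all: by field.
Qed.


Lemma open_Uf : open Uf.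
Proof.
have cs : forall F : 'rV[R]_(4 + 4) -> R, Sm setT F -> continuous F.
  by move=> F SF x; have [/(_ x I) [] ] := Sm_props openT SF.
have -> : Uf = (fun z => su (crd z)) @^-1` [set x | 0 < x] `&` (fun z => sv (crd z)) @^-1` [set x | 0 < x].
  by [].
apply: openI; apply: open_comp; try exact: open_gt; move=> x _; apply: cs;
  rewrite /su /sv /uu /vv /crd /=; sm.
Qed.

End Conc.

Theorem lemma3p9 (R : realType) : diffeomorphic (@SH R) (@S3xS3xR R).
Proof.
exists (@ff R), (@gg R).
split; first exact: ff_in.
split; first exact: gg_in.
split; first exact: gf.
split; first exact: fg.
split.
  move=> a Ha; exists (Uf R); split; first exact: open_Uf.
  split; first by have [p e] := @SH_pos R a Ha; rewrite /Uf /= e.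
  exists (@ff R); split => //.
  exact: (SmV_smooth (@open_Uf R) (@Sm_ff R)).
move=> b _; exists setT; split; first exact: openT.
split => //; exists (@gg R); split => //.
exact: (SmV_smooth openT (@Sm_gg R)).
Qed.
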